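(* Let $k=0$ and let $a$ be a regular scale factor which is an even function on $\mathbb R$, such that either $\infty>\dot a(0^+)>0$, or $\dot a(0)=0$ but $a^{(n)}(0)\ne0$ for some $n$. Then for every $\tau>0$ and every $(x,y,z)$ with $\sqrt{x^2+y^2+z^2}=\rho_{\mathcal M_\tau}$, the $4\times4$ matrix \[ \begin{pmatrix} g_{\tau\tau} & 0 & 0 & 0\\ 0 & 1+\lambda_0(y^2+z^2) & -\lambda_0xy & -\lambda_0xz\\ 0 & -\lambda_0xy & 1+\lambda_0(x^2+z^2) & -\lambda_0yz\\ 0 & -\lambda_0xz & -\lambda_0yz & 1+\lambda_0(x^2+y^2)\end{pmatrix}, \] with $g_{\tau\tau}=g_{\tau\tau}(\tau,\rho_{\mathcal M_\tau})$ and $\lambda_0=\lambda_0(\tau,\rho_{\mathcal M_\tau})$, has rank $2$. Thus the cotangent space at each point of the cosmological-time-zero set is two dimensional.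
   Context: A function $a:[0,\infty)\to[0,\infty)$ is a regular scale factor if: (a) $a(0)=0$; (b) $a$ is increasing and continuous on $[0,\infty)$, twice continuously differentiable on $(0,\infty)$, with an inverse function on $[0,\infty)$; (c) $\frac{a(t)\ddot a(t)}{\dot a(t)^2}\le1$ for all $t>0$ (presupposing $\dot a(t)\ne0$). Here $a$ is regarded on $\mathbb R$ via $a(-t)=a(t)$; $\dot a(0^+)=\lim_{t\to0^+}\dot a(t)$. For $0<s<\tau$, $\chi_s(\tau)=\int_s^\tau\frac{1}{a(t)}\frac{a(\tau)}{\sqrt{a^2(\tau)-a^2(t)}}dt$. For $\tau>0$, $\rho_{\mathcal M_\tau}=\int_0^\tau\frac{a(t)}{\sqrt{a^2(\tau)-a^2(t)}}dt$; for $0<\rho<2\rho_{\mathcal M_\tau}$, $t_0(\tau,\rho)$ is the unique $t_0\in(-\tau,\tau)$ with $\rho=\int_{t_0}^\tau\frac{a(t)}{\sqrt{a^2(\tau)-a^2(t)}}dt$ ($t_0=0$ iff $\rho=\rho_{\mathcal M_\tau}$). Define $f(\tau,t_0)=\int_{t_0}^{\tau}\frac{\ddot a(t)}{\dot a(t)^2}\left(\frac{\sqrt{a^2(\tau)-a^2(t_0)}}{\sqrt{a^2(\tau)-a^2(t)}}-1\right)dt$ for $0\le t_0<\tau$ and $g_{\tau\tau}(\tau,\rho)=-[1-\dot a(\tau)f(\tau,t_0(\tau,\rho))]^2$, so $g_{\tau\tau}(\tau,\rho_{\mathcal M_\tau})=-[1-\dot a(\tau)f(\tau,0)]^2$. For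 $t_0=t_0(\tau,\rho)\ne0$, $g_{\theta\theta}(\tau,\rho)=a^2(t_0)\chi_{|t_0|}(\tau)^2$, and $g_{\theta\theta}(\tau,\rho_{\mathcal M_\tau})$ is the limit as $t_0\to0$. $\lambda_0(\tau,\rho)=\frac{g_{\theta\theta}(\tau,\rho)-\rho^2}{\rho^4}$. The displayed matrix is the extended spatially flat Robertson–Walker metric in Fermi coordinates $(\tau,x,y,z)$ of a comoving observer, with $\rho=\sqrt{x^2+y^2+z^2}$. *)

(* Defs.v *)
From Stdlib Require Import Reals.
From Coquelicot Require Import Coquelicot.
From mathcomp Require Import all_boot all_algebra.
From mathcomp Require Import Rstruct.

Open Scope R_scope.

Definition iint (f : R -> R) (lo hi : R) : R :=
  RInt_gen f (at_right lo) (at_left hi).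

Definition ad (a : R -> R) : R -> R := Derive a.
Definition add (a : R -> R) : R -> R := Derive (Derive a).

(* regular scale factor (a regarded on R, conditions on [0,oo)) *)
Definition regular_scale_factor (a : R -> R) : Prop :=
  a 0 = 0 /\
  (forall t, 0 <= t -> 0 <= a t) /\
  (forall s t, 0 <= s -> s < t -> a s < a t) /\
  (forall t, 0 <= t -> continuous a t) /\
  (forall t, 0 < t -> ex_derive a t /\ ex_derive (Derive a) t /\
                      continuous (Derive (Derive a)) t) /\
  (forall y, 0 <= y -> exists t, 0 <= t /\ a t = y) /\
  (forall t, 0 < t -> ad a t <> 0 /\ a t * add a t / (ad a t) ^ 2 <= 1).

Definition chi (a : R -> R) (s tau : R) : R :=
  iint (fun t => / a t * (a tau / sqrt (a tau ^ 2 - a t ^ 2))) s tau.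

Definition rhoM (a : R -> R) (tau : R) : R :=
  iint (fun t => a t / sqrt (a tau ^ 2 - a t ^ 2)) 0 tau.

Definition ff (a : R -> R) (tau t0 : R) : R :=
  iint (fun t => add a t / (ad a t) ^ 2 *
          (sqrt (a tau ^ 2 - a t0 ^ 2) / sqrt (a tau ^ 2 - a t ^ 2) - 1)) t0 tau.

Definition gtt_M (a : R -> R) (tau : R) : R :=
  - (1 - ad a tau * ff a tau 0) ^ 2.

Definition gthth_M (a : R -> R) (tau : R) : R :=
  real (Lim (fun t0 => a t0 ^ 2 * chi a (Rabs t0) tau ^ 2) 0).

Definition lambda0_M (a : R -> R) (tau : R) : R :=
  (gthth_M a tau - rhoM a tau ^ 2) / rhoM a tau ^ 4.

Definition mx_of_rows (rows : seq (seq R)) : 'M[R]_4 :=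
  \matrix_(i < 4, j < 4) nth 0 (nth [::] rows i) j.

Definition metric_M (a : R -> R) (tau x y z : R) : 'M[R]_4 :=
  let g := gtt_M a tau in
  let l := lambda0_M a tau in
  mx_of_rows
    [:: [:: g; 0; 0; 0];
        [:: 0; 1 + l * (y ^ 2 + z ^ 2); - (l * x * y); - (l * x * z)];
        [:: 0; - (l * x * y); 1 + l * (x ^ 2 + z ^ 2); - (l * y * z)];
        [:: 0; - (l * x * z); - (l * y * z); 1 + l * (x ^ 2 + y ^ 2)]].

(* Main.v *)
Require Import Defs.
From Stdlib Require Import Reals.
From Coquelicot Require Import Coquelicot.
From mathcomp Require Import all_boot all_algebra.
From mathcomp Require Import Rstruct.
From Stdlib Require Import Lra Psatz Classical.
Import Defs.
Open Scope R_scope.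
Lemma sub_pos x y : x < y -> 0 < y - x.
Proof. lra. Qed.

Lemma ballR x e y : ball x e y <-> Rabs (y - x) < e.
Proof. by []. Qed.

Lemma ev_right lo m : lo < m -> at_right lo (fun x => lo < x < m).
Proof.
move=> h. exists (mkposreal _ (sub_pos _ _ h)) => y /= hy hly.
move: hy; rewrite ballR => hy. split => //. move: hy; unfold Rabs; destruct Rcase_abs; lra.
Qed.

Lemma ev_left m hi : m < hi -> at_left hi (fun y => m < y < hi).
Proof.
move=> h. exists (mkposreal _ (sub_pos _ _ h)) => y /= hy hly.
move: hy; rewrite ballR => hy. split => //. move: hy; unfold Rabs; destruct Rcase_abs; lra.
Qed.

Lemma mono_lim_left (F : R -> R) m hi M : m < hi ->
  (forall x y, m <= x -> x <= y -> y < hi -> F x <= F y) ->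
  (forall x, m <= x < hi -> F x <= M) ->
  exists L, filterlim F (at_left hi) (locally L) /\ (forall x, m <= x < hi -> F x <= L).
Proof.
move=> hmh hmon hb.
pose E := fun v => exists x, m <= x < hi /\ v = F x.
have hE : bound E by exists M => v [x [hx ->]]; apply: hb.
have hne : exists v, E v by exists (F m), m; split => //; lra.
case: (completeness E hE hne) => L [hub hlub].
have hle : forall x, m <= x < hi -> F x <= L by move=> x hx; apply: hub; exists x.
exists L; split => //.
apply/filterlim_locally => eps.
have : exists x0, m <= x0 < hi /\ L - eps < F x0.
  apply: NNPP => hn. have : L <= L - eps.
    apply: hlub => v [x [hx ->]]. apply: Rnot_lt_le => hlt. apply: hn. by exists x.
  case: eps {hn} => e he /=; lra.
case=> x0 [hx0 hlt].
exists (mkposreal _ (sub_pos _ _ (proj2 hx0))) => y /= hy hyh.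
rewrite ballR. move: hy; rewrite ballR => hy.
have hy0 : x0 < y by move: hy; unfold Rabs; destruct Rcase_abs; lra.
have h1 := hmon x0 y (proj1 hx0) (Rlt_le _ _ hy0) hyh.
have h2 := hle y (conj (Rle_trans _ _ _ (proj1 hx0) (Rlt_le _ _ hy0)) hyh).
unfold Rabs; destruct Rcase_abs; lra.
Qed.

Lemma mono_lim_right (F : R -> R) lo m M : lo < m ->
  (forall x y, lo < x -> x <= y -> y <= m -> F y <= F x) ->
  (forall x, lo < x <= m -> F x <= M) ->
  exists L, filterlim F (at_right lo) (locally L) /\ (forall x, lo < x <= m -> F x <= L).
Proof.
move=> hmh hmon hb.
pose E := fun v => exists x, lo < x <= m /\ v = F x.
have hE : bound E by exists M => v [x [hx ->]]; apply: hb.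
have hne : exists v, E v by exists (F m), m; split => //; lra.
case: (completeness E hE hne) => L [hub hlub].
have hle : forall x, lo < x <= m -> F x <= L by move=> x hx; apply: hub; exists x.
exists L; split => //.
apply/filterlim_locally => eps.
have : exists x0, lo < x0 <= m /\ L - eps < F x0.
  apply: NNPP => hn. have : L <= L - eps.
    apply: hlub => v [x [hx ->]]. apply: Rnot_lt_le => hlt. apply: hn. by exists x.
  case: eps {hn} => e he /=; lra.
case=> x0 [hx0 hlt].
exists (mkposreal _ (sub_pos _ _ (proj1 hx0))) => y /= hy hyh.
rewrite ballR. move: hy; rewrite ballR => hy.
have hy0 : y < x0 by move: hy; unfold Rabs; destruct Rcase_abs; lra.
have h1 := hmon y x0 hyh (Rlt_le _ _ hy0) (proj2 hx0).
have h2 := hle y (conj hyh (Rle_trans _ _ _ (Rlt_le _ _ hy0) (proj2 hx0))).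
unfold Rabs; destruct Rcase_abs; lra.
Qed.

Lemma exRInt_c (f : R -> R) x y : (forall t, Rmin x y <= t <= Rmax x y -> continuous f t) -> ex_RInt f x y.
Proof. exact: ex_RInt_continuous. Qed.

Lemma lowcont (f : R -> R) lo m M : lo < m ->
  (forall t, lo <= t <= m -> continuous f t) ->
  (forall t, lo <= t <= m -> Rabs (f t) <= M) ->
  filterlim (fun x => RInt f x m) (at_right lo) (locally (RInt f lo m)).
Proof.
move=> hlm hc hb.
have hex : forall x y, lo <= x <= m -> lo <= y <= m -> ex_RInt f x y.
  move=> x y hx hy; apply: exRInt_c => t ht; apply: hc.
  move: ht; rewrite /Rmin /Rmax; destruct Rle_dec; lra.
have hM : 0 <= M by have := hb lo (conj (Rle_refl _) (Rlt_le _ _ hlm)); move: (Rabs_pos (f lo)); lra.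
apply/filterlim_locally => [[e he]].
pose d := Rmin (m - lo) (e / (M + 1)).
have hd : 0 < d.
  apply: Rmin_pos; first lra. apply: Rdiv_lt_0_compat; lra.
exists (mkposreal _ hd) => x /= hx hlx.
move: hx; rewrite ballR => hx.
have hx1 : x - lo < d by move: hx; unfold Rabs; destruct Rcase_abs; lra.
have hdm : d <= m - lo by apply: Rmin_l.
have hde : d <= e / (M+1) by apply: Rmin_r.
rewrite ballR.
have hch := RInt_Chasles f lo x m (hex lo x ltac:(lra) ltac:(lra)) (hex x m ltac:(lra) ltac:(lra)).
rewrite /plus /= in hch.
have hb2 := abs_RInt_le_const f lo x M (Rlt_le _ _ hlx) (hex lo x ltac:(lra) ltac:(lra))
   (fun t ht => hb t ltac:(lra)).
have -> : RInt f x m - RInt f lo m = - RInt f lo x by lra.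
rewrite Rabs_Ropp.
apply: Rle_lt_trans hb2 _.
have h1 : (x - lo) * M <= e / (M+1) * M by apply: Rmult_le_compat_r; lra.
have h3 : e / (M+1) * M = e - e / (M+1) by field; lra.
have h4 : 0 < e / (M+1) by apply: Rdiv_lt_0_compat; lra.
rewrite /=; lra.
Qed.

Lemma c_mult (f g : R -> R) x : continuous f x -> continuous g x -> continuous (fun t => f t * g t) x.
Proof. exact: continuous_mult. Qed.
Lemma c_plus (f g : R -> R) x : continuous f x -> continuous g x -> continuous (fun t => f t + g t) x.
Proof. exact: continuous_plus. Qed.
Lemma c_opp (f : R -> R) x : continuous f x -> continuous (fun t => - f t) x.
Proof. exact: continuous_opp. Qed.
Lemma c_minus (f g : R -> R) x : continuous f x -> continuous g x -> continuous (fun t => f t - g t) x.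
Proof. move=> h1 h2; apply: c_plus h1 (c_opp _ _ h2). Qed.
Lemma c_inv (f : R -> R) x : continuous f x -> f x <> 0 -> continuous (fun t => / f t) x.
Proof. exact: continuous_Rinv_comp. Qed.
Lemma c_div (f g : R -> R) x : continuous f x -> continuous g x -> g x <> 0 -> continuous (fun t => f t / g t) x.
Proof. move=> h1 h2 h3; apply: c_mult h1 (c_inv _ _ h2 h3). Qed.
Lemma c_sqrt (f : R -> R) x : continuous f x -> continuous (fun t => sqrt (f t)) x.
Proof. exact: continuous_sqrt_comp. Qed.
Lemma c_const (c : R) x : continuous (fun _ : R => c) x.
Proof. exact: continuous_const. Qed.
Lemma c_id x : continuous (fun t : R => t) x.
Proof. exact: continuous_id. Qed.
Lemma c_pow (f : R -> R) n x : continuous f x -> continuous (fun t => f t ^ n) x.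
Proof. move=> h; elim: n => [|n IH] /=; [exact: c_const | exact: c_mult h IH]. Qed.

Ltac cont := repeat first
  [ apply: c_const | apply: c_id | apply: c_pow | apply: c_sqrt | apply: c_div
  | apply: c_inv | apply: c_mult | apply: c_minus | apply: c_plus | apply: c_opp ].

Lemma gen_lim (f : R -> R) lo m hi L1 L2 : lo < m < hi ->
  (forall t, lo < t < hi -> continuous f t) ->
  filterlim (fun x => RInt f x m) (at_right lo) (locally L1) ->
  filterlim (fun y => RInt f m y) (at_left hi) (locally L2) ->
  filterlim (fun ab => RInt f (fst ab) (snd ab)) (filter_prod (at_right lo) (at_left hi)) (locally (L1 + L2)).
Proof.
move=> hm hc h1 h2.
have hex : forall x y, lo < x < hi -> lo < y < hi -> ex_RInt f x y.
  move=> x y hx hy; apply: exRInt_c => t ht; apply: hc.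
  move: ht; rewrite /Rmin /Rmax; destruct Rle_dec; lra.
have ev : filter_prod (at_right lo) (at_left hi)
   (fun ab => lo < fst ab < m /\ m < snd ab < hi).
  exists (fun x => lo < x < m) (fun y => m < y < hi).
  - apply: ev_right; lra.
  - apply: ev_left; lra.
  - by move=> x y hx hy.
apply: (filterlim_ext_loc (fun ab => RInt f (fst ab) m + RInt f m (snd ab))).
  apply: filter_imp ev => [[x y]] /= [hx hy].
  have := RInt_Chasles f x m y (hex x m ltac:(lra) ltac:(lra)) (hex m y ltac:(lra) ltac:(lra)).
  by rewrite /plus /=.
apply: (filterlim_comp_2 _ _ Rplus).
- exact: (filterlim_comp _ _ _ fst (fun x => RInt f x m) _ _ _ filterlim_fst h1).
- exact: (filterlim_comp _ _ _ snd (fun y => RInt f m y) _ _ _ filterlim_snd h2).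
- exact: (@filterlim_plus _ R_NormedModule L1 L2).
Qed.

Lemma gen_assemble (f : R -> R) lo m hi L1 L2 : lo < m < hi ->
  (forall t, lo < t < hi -> continuous f t) ->
  filterlim (fun x => RInt f x m) (at_right lo) (locally L1) ->
  filterlim (fun y => RInt f m y) (at_left hi) (locally L2) ->
  is_RInt_gen f (at_right lo) (at_left hi) (L1 + L2).
Proof.
move=> hm hc h1 h2.
have hex : forall x y, lo < x < hi -> lo < y < hi -> ex_RInt f x y.
  move=> x y hx hy; apply: exRInt_c => t ht; apply: hc.
  move: ht; rewrite /Rmin /Rmax; destruct Rle_dec; lra.
apply: (filterlimi_lim_ext_loc (fun ab => RInt f (fst ab) (snd ab))).
  exists (fun x => lo < x < m) (fun y => m < y < hi).
  - apply: ev_right; lra.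
  - apply: ev_left; lra.
  - move=> x y hx hy /=. apply: RInt_correct. apply: hex; lra.
exact: gen_lim hm hc h1 h2.
Qed.

Lemma RInt_sqrt_tail K m y hi : m <= y < hi ->
  RInt (fun t => K / sqrt (hi - t)) m y = 2 * K * (sqrt (hi - m) - sqrt (hi - y)).
Proof.
move=> hy.
have h := is_RInt_derive (fun t => - 2 * K * sqrt (hi - t)) (fun t => K / sqrt (hi - t)) m y.
rewrite (is_RInt_unique _ _ _ _ (h _ _)).
- rewrite /Hierarchy.minus /Hierarchy.plus /Hierarchy.opp /=; ring.
- move=> x hx. have hx' : x < hi by move: hx; rewrite /Rmin /Rmax; destruct Rle_dec; lra.
  auto_derive; first lra.
  have := sqrt_lt_R0 (hi - x) ltac:(lra). move=> hs. have -> : hi + - x = hi - x by ring. field. lra.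
- move=> x hx. have hx' : x < hi by move: hx; rewrite /Rmin /Rmax; destruct Rle_dec; lra.
  apply: c_div; [exact: c_const| apply: c_sqrt; apply: c_minus; [exact: c_const| exact: c_id]|].
  have := sqrt_lt_R0 (hi - x) ltac:(lra). lra.
Qed.

Lemma tail_nonneg (g : R -> R) m hi K : m < hi ->
  (forall t, m <= t < hi -> continuous g t) ->
  (forall t, m <= t < hi -> 0 <= g t <= K / sqrt (hi - t)) ->
  exists L, filterlim (fun y => RInt g m y) (at_left hi) (locally L) /\ 0 <= L.
Proof.
move=> hmh hc hb.
have hex : forall x y, m <= x < hi -> m <= y < hi -> ex_RInt g x y.
  move=> x y hx hy; apply: exRInt_c => t ht; apply: hc.
  move: ht; rewrite /Rmin /Rmax; destruct Rle_dec; lra.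
have hK : 0 <= K.
  have := hb m ltac:(lra). have := sqrt_lt_R0 (hi - m) ltac:(lra). move=> hs [h1 h2].
  have : 0 <= K / sqrt (hi - m) by lra.
  move=> h3. have := Rmult_le_pos _ _ h3 (Rlt_le _ _ hs). rewrite /Rdiv Rmult_assoc Rinv_l; lra.
have hexK : forall y, m <= y < hi -> ex_RInt (fun t => K / sqrt (hi - t)) m y.
  move=> y hy; apply: exRInt_c => t ht.
  have ht' : t < hi by move: ht; rewrite /Rmin /Rmax; destruct Rle_dec; lra.
  apply: c_div; [exact: c_const| apply: c_sqrt; apply: c_minus; [exact: c_const| exact: c_id]|].
  have := sqrt_lt_R0 (hi - t) ltac:(lra). lra.
case: (mono_lim_left (fun y => RInt g m y) m hi (2 * K * sqrt (hi - m)) hmh).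
- move=> x y hx hxy hy /=.
  rewrite -(RInt_Chasles g m x y (hex m x ltac:(lra) ltac:(lra)) (hex x y ltac:(lra) ltac:(lra))).
  rewrite /plus /=.
  have := RInt_ge_0 g x y hxy (hex x y ltac:(lra) ltac:(lra)) (fun t ht => proj1 (hb t ltac:(lra))).
  lra.
- move=> y hy /=.
  apply: Rle_trans (_ : RInt (fun t => K / sqrt (hi - t)) m y <= _).
  + apply: RInt_le; [lra | apply: hex; lra | apply: hexK; lra | move=> t ht; apply: (proj2 (hb t _)); lra].
  + rewrite RInt_sqrt_tail //. have := sqrt_pos (hi - y). nra.
- move=> L [hL hle]; exists L; split => //.
  apply: Rle_trans (hle m ltac:(lra)). rewrite RInt_point /Hierarchy.zero /=; lra.
Qed.

Lemma tail_abs (g : R -> R) m hi K : m < hi ->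
  (forall t, m <= t < hi -> continuous g t) ->
  (forall t, m <= t < hi -> Rabs (g t) <= K / sqrt (hi - t)) ->
  exists L, filterlim (fun y => RInt g m y) (at_left hi) (locally L).
Proof.
move=> hmh hc hb.
have hcK : forall t, m <= t < hi -> continuous (fun t => K / sqrt (hi - t)) t.
  move=> t ht.
  apply: c_div; [exact: c_const| apply: c_sqrt; apply: c_minus; [exact: c_const| exact: c_id]|].
  have := sqrt_lt_R0 (hi - t) ltac:(lra). lra.
case: (tail_nonneg (fun t => g t + K / sqrt (hi - t)) m hi (2 * K) hmh).
- move=> t ht; apply: c_plus; [exact: hc | exact: hcK].
- move=> t ht; have := hb t ht; move: (Rabs_pos (g t)); rewrite /Rabs; destruct Rcase_abs; lra.
move=> L1 [h1 _].
case: (tail_nonneg (fun t => K / sqrt (hi - t)) m hi K hmh).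
- exact: hcK.
- move=> t ht; have := hb t ht; move: (Rabs_pos (g t)); lra.
move=> L2 [h2 _].
exists (L1 - L2).
have hex : forall y (h : R -> R), m <= y < hi -> (forall t, m <= t < hi -> continuous h t) -> ex_RInt h m y.
  move=> y h hy hh; apply: exRInt_c => t ht; apply: hh.
  move: ht; rewrite /Rmin /Rmax; destruct Rle_dec; lra.
apply: (filterlim_ext_loc (fun y => RInt (fun t => g t + K / sqrt (hi - t)) m y - RInt (fun t => K / sqrt (hi - t)) m y)).
  apply: filter_imp (ev_left m hi hmh) => y hy.
  have e1 := RInt_plus g (fun t => K / sqrt (hi - t)) m y (hex y g ltac:(lra) hc) (hex y _ ltac:(lra) hcK).
  rewrite /plus /= in e1. rewrite e1. ring.
have h2' := filterlim_comp _ _ _ _ Ropp _ _ _ h2 (@filterlim_opp _ R_NormedModule L2).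
apply: (filterlim_comp_2 _ _ Rplus h1 h2').
exact: (@filterlim_plus _ R_NormedModule L1 (- L2)).
Qed.

Lemma lim_plus {T} (F : (T -> Prop) -> Prop) {FF : Filter F} (f g : T -> R) l1 l2 :
  filterlim f F (locally l1) -> filterlim g F (locally l2) ->
  filterlim (fun x => f x + g x) F (locally (l1 + l2)).
Proof.
move=> h1 h2. apply: (filterlim_comp_2 _ _ Rplus h1 h2).
exact: (@filterlim_plus _ R_NormedModule l1 l2).
Qed.

Lemma lim_mulc {T} (F : (T -> Prop) -> Prop) {FF : Filter F} (f : T -> R) c l :
  filterlim f F (locally l) -> filterlim (fun x => c * f x) F (locally (c * l)).
Proof.
move=> h. apply: (filterlim_comp _ _ _ f (fun v => c * v) _ _ _ h).
exact (c_mult (fun _ => c) (fun v => v) l (c_const c l) (c_id l)).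
Qed.

Lemma lim_const {T} (F : (T -> Prop) -> Prop) {FF : Filter F} (c : R) :
  filterlim (fun _ : T => c) F (locally c).
Proof. exact: filterlim_const. Qed.

Lemma lim_right_cont (f : R -> R) x : continuous f x -> filterlim f (at_right x) (locally (f x)).
Proof. move=> h. apply: (filterlim_filter_le_1 _ _ h). move=> P HP. rewrite /at_right /at_left /within. apply: filter_imp HP. by move=> u hu _. Qed.

Lemma lim_left_cont (f : R -> R) x : continuous f x -> filterlim f (at_left x) (locally (f x)).
Proof. move=> h. apply: (filterlim_filter_le_1 _ _ h). move=> P HP. rewrite /at_right /at_left /within. apply: filter_imp HP. by move=> u hu _. Qed.

Section Main.
Variable a : R -> R.
Hypothesis Hreg : regular_scale_factor a.
Variable tau : R.
Hypothesis htau : 0 < tau.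

Lemma a0 : a 0 = 0.
Proof. by case: Hreg. Qed.
Lemma a_inc s t : 0 <= s -> s < t -> a s < a t.
Proof. case: Hreg => _ [_ [H _]]; exact: H. Qed.
Lemma a_pos t : 0 < t -> 0 < a t.
Proof. move=> h; rewrite -a0; apply: a_inc => //; lra. Qed.
Lemma a_nn t : 0 <= t -> 0 <= a t.
Proof. case: Hreg => _ [H _]; exact: H. Qed.
Lemma a_le s t : 0 <= s -> s <= t -> a s <= a t.
Proof. move=> h1 h2; case: (Rle_lt_or_eq_dec _ _ h2) => h3; [apply: Rlt_le; exact: a_inc| rewrite h3; lra]. Qed.
Lemma a_cont t : 0 <= t -> continuous a t.
Proof. case: Hreg => _ [_ [_ [H _]]]; exact: H. Qed.
Lemma a_diff t : 0 < t -> ex_derive a t /\ ex_derive (Derive a) t /\ continuous (Derive (Derive a)) t.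
Proof. case: Hreg => _ [_ [_ [_ [H _]]]]; exact: H. Qed.
Lemma a_der t : 0 < t -> is_derive a t (ad a t).
Proof. move=> h; apply: Derive_correct; exact: (proj1 (a_diff t h)). Qed.
Lemma ad_der t : 0 < t -> is_derive (ad a) t (add a t).
Proof. move=> h; apply: Derive_correct; exact: (proj1 (proj2 (a_diff t h))). Qed.
Lemma ad_cont t : 0 < t -> continuous (ad a) t.
Proof. move=> h; apply: ex_derive_continuous; exact: (proj1 (proj2 (a_diff t h))). Qed.
Lemma add_cont t : 0 < t -> continuous (add a) t.
Proof. move=> h; exact: (proj2 (proj2 (a_diff t h))). Qed.
Lemma a_cont' t : 0 <= t -> continuity_pt a t.
Proof. move=> h; apply/continuity_pt_filterlim; exact: a_cont. Qed.
Lemma hcond t : 0 < t -> ad a t <> 0 /\ a t * add a t / (ad a t) ^ 2 <= 1.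
Proof. case: Hreg => _ [_ [_ [_ [_ [_ H]]]]]; exact: H. Qed.

Lemma ad_pos t : 0 < t -> 0 < ad a t.
Proof.
move=> ht. have [hne _] := hcond t ht.
case: (Rlt_or_le 0 (ad a t)) => // hle.
have hl : ad a t < 0 by case: (Rle_lt_or_eq_dec _ _ hle) => // e; exfalso; exact: hne.
have := proj1 (is_derive_Reals _ _ _) (a_der t ht) (- ad a t / 2) ltac:(lra).
case=> [[del hdel]] /= H.
have hh : del / 2 <> 0 by lra.
have := H (del / 2) hh ltac:(rewrite Rabs_right; lra).
have := a_inc t (t + del / 2) ltac:(lra) ltac:(lra).
move=> hinc.
have : 0 < (a (t + del / 2) - a t) / (del / 2) by apply: Rdiv_lt_0_compat; lra.
move=> hq. rewrite Rabs_lt_between'. lra.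
Qed.

Lemma hcond' t : 0 < t -> a t * add a t <= ad a t ^ 2.
Proof.
move=> ht; have [_ h] := hcond t ht. have hd := ad_pos t ht.
have h2 : 0 < ad a t ^ 2 by nra.
have := Rmult_le_compat_r _ _ _ (Rlt_le _ _ h2) h. rewrite /Rdiv Rmult_assoc Rinv_l; lra.
Qed.

Definition A := a tau.
Definition sf t := sqrt (A ^ 2 - a t ^ 2).

Lemma A_pos : 0 < A.
Proof. exact: a_pos. Qed.

Lemma sf_pos t : 0 <= t < tau -> 0 < sf t.
Proof.
move=> ht; rewrite /sf; apply: sqrt_lt_R0.
have := a_inc t tau ltac:(lra) ltac:(lra). have := a_nn t ltac:(lra). rewrite /A. nra.
Qed.

Lemma sf_sq t : 0 <= t <= tau -> sf t ^ 2 = A ^ 2 - a t ^ 2.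
Proof.
move=> ht; rewrite /sf pow2_sqrt //.
have := a_le t tau ltac:(lra) ltac:(lra). have := a_nn t ltac:(lra). rewrite /A. nra.
Qed.

Lemma sf_nn t : 0 <= sf t.
Proof. exact: sqrt_pos. Qed.

Lemma sf_le_A t : 0 <= t -> sf t <= A.
Proof.
move=> ht. rewrite /sf. have hA := A_pos.
apply: Rle_trans (_ : _ <= sqrt (A^2)) _; last by rewrite sqrt_pow2; lra.
apply: sqrt_le_1_alt. have := a_nn t ht. nra.
Qed.

Lemma sf_lt_A t : 0 < t <= tau -> sf t < A.
Proof.
move=> ht. rewrite /sf. have hA := A_pos.
apply: Rlt_le_trans (_ : _ < sqrt (A^2)) _; last by rewrite sqrt_pow2; lra.
apply: sqrt_lt_1_alt. have := a_pos t ltac:(lra). have := a_le t tau ltac:(lra) ltac:(lra). rewrite /A. nra.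
Qed.

Lemma sf_anti s t : 0 <= s -> s <= t -> sf t <= sf s.
Proof.
move=> hs hst. rewrite /sf. apply: sqrt_le_1_alt.
have := a_le s t hs hst. have := a_nn s hs. nra.
Qed.

Lemma sf_cont t : 0 <= t -> continuous sf t.
Proof. move=> ht; rewrite /sf; cont; exact: a_cont. Qed.

Lemma ad_tau : 0 < ad a tau.
Proof. exact: ad_pos. Qed.

Lemma near_tau : exists m K0, 0 < m < tau /\ 0 < K0 /\
  forall t, m <= t < tau -> / sf t <= K0 / sqrt (tau - t).
Proof.
pose d := ad a tau.
have hd : 0 < d := ad_tau.
have := proj1 (filterlim_locally _ _) (ad_cont tau htau) (mkposreal (d / 2) ltac:(lra)) .
rewrite /= => -[[del hdel] /= Hdel].
pose m := Rmax (tau / 2) (tau - del / 2).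
have hm : 0 < m < tau.
  rewrite /m /Rmax; destruct Rle_dec; lra.
pose K0 := / sqrt (d / 2 * A).
have hdA : 0 < d / 2 * A by have := A_pos; nra.
exists m, K0; split => //; split.
  rewrite /K0; apply: Rinv_0_lt_compat; exact: sqrt_lt_R0.
move=> t ht.
have hmt : tau - del / 2 <= m by apply: Rmax_r.
have hm2 : tau / 2 <= m by apply: Rmax_l.
have [xi [hxi Hxi]] : exists xi, t <= xi <= tau /\ a tau - a t = ad a xi * (tau - t).
  have := MVT_gen a t tau (ad a).
  rewrite /Rmin /Rmax; destruct Rle_dec; last lra.
  case.
  - move=> x hx; apply: a_der; lra.
  - move=> x hx; apply: a_cont'; lra.
  move=> xi [h1 h2]; exists xi; split => //.
have hxi' : ad a xi > d / 2.
  have hb : ball tau del xi by apply/ballR; rewrite Rabs_left1; lra.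
  have := Hdel xi hb. move/ballR. rewrite Rabs_lt_between'. rewrite /d. lra.
have hAa : A - a t >= d / 2 * (tau - t) by rewrite /A; nra.
have hat := a_nn t ltac:(lra).
have hs2 : d / 2 * A * (tau - t) <= sf t ^ 2.
  rewrite sf_sq; last lra.
  have : a t <= A by rewrite /A; apply: a_le; lra.
  nra.
have hsp := sf_pos t ltac:(lra).
have htt : 0 < tau - t by lra.
have hs3 : sqrt (d / 2 * A) * sqrt (tau - t) <= sf t.
  rewrite -sqrt_mult; [|lra|lra].
  rewrite -(sqrt_pow2 (sf t)); last lra.
  apply: sqrt_le_1_alt. lra.
have hq1 := sqrt_lt_R0 _ hdA. have hq2 := sqrt_lt_R0 _ htt.
rewrite /K0. apply: (Rmult_le_reg_r (sf t * sqrt (tau - t))); first nra.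
field_simplify; try lra. apply: (Rmult_le_reg_r _ _ _ hq1). have -> : sf t / sqrt (d / 2 * A) * sqrt (d / 2 * A) = sf t by field; lra. lra.
Qed.

Lemma inv_sf_le u t : 0 <= u -> u <= t -> t < tau -> / sf u <= / sf t.
Proof.
move=> hu hut ht. have := sf_pos t ltac:(lra). have := sf_anti u t hu hut. move=> h1 h2.
apply: Rinv_le_contravar; lra.
Qed.

Lemma aA t : 0 <= t <= tau -> a t <= A.
Proof. move=> ht; rewrite /A; apply: a_le; lra. Qed.

Lemma rho_lim : exists L,
  is_RInt_gen (fun t => a t / sqrt (a tau ^ 2 - a t ^ 2)) (at_right 0) (at_left tau) L /\ 0 < L.
Proof.
case: near_tau => m [K0 [hm [hK0 hK]]].
pose f t := a t / sf t.
have hc : forall t, 0 <= t < tau -> continuous f t.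
  move=> t ht; apply: c_div; [apply: a_cont; lra | apply: sf_cont; lra | have := sf_pos t ht; lra].
have hfnn : forall t, 0 <= t < tau -> 0 <= f t.
  move=> t ht; rewrite /f; apply: Rle_mult_inv_pos; [apply: a_nn; lra | apply: sf_pos; lra].
have hA := A_pos.
have h1 := lowcont f 0 m (A / sf m) (proj1 hm) (fun t ht => hc t ltac:(lra)).
have h1' : filterlim (fun x => RInt f x m) (at_right 0) (locally (RInt f 0 m)).
  apply: h1 => t ht. rewrite Rabs_right; last by (apply: Rle_ge; apply: hfnn; lra).
  rewrite /f /Rdiv. apply: Rmult_le_compat.
  - apply: a_nn; lra.
  - apply: Rlt_le; apply: Rinv_0_lt_compat; apply: sf_pos; lra.
  - apply: aA; lra.
  - apply: inv_sf_le; lra.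
case: (tail_nonneg f m tau (A * K0) (proj2 hm)).
- move=> t ht; apply: hc; lra.
- move=> t ht; split; first (apply: hfnn; lra).
  rewrite /f /Rdiv Rmult_assoc. apply: Rmult_le_compat.
  + apply: a_nn; lra.
  + apply: Rlt_le; apply: Rinv_0_lt_compat; apply: sf_pos; lra.
  + apply: aA; lra.
  + by have := hK t ht; rewrite /Rdiv.
move=> L2 [h2 hL2].
exists (RInt f 0 m + L2); split.
- apply: gen_assemble h1' h2; first lra. move=> t ht; apply: hc; lra.
- have : 0 < RInt f 0 m.
    apply: RInt_gt_0; first lra.
    + move=> t ht; rewrite /f; apply: Rdiv_lt_0_compat; [apply: a_pos; lra | apply: sf_pos; lra].
    + move=> t ht; apply: hc; lra.
  lra.
Qed.

Lemma rho_pos : 0 < rhoM a tau.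
Proof.
case: rho_lim => L [hL hpos].
rewrite /rhoM /iint (is_RInt_gen_unique _ _ hL) //.
Qed.

Definition psi t := / a t * (A / sf t).

Lemma psi_cont t : 0 < t < tau -> continuous psi t.
Proof.
move=> ht. rewrite /psi. apply: c_mult.
- apply: c_inv; [apply: a_cont; lra | have := a_pos t ltac:(lra); lra].
- apply: c_div; [exact: c_const | apply: sf_cont; lra | have := sf_pos t ltac:(lra); lra].
Qed.

Lemma psi_nn t : 0 < t < tau -> 0 <= psi t.
Proof.
move=> ht; rewrite /psi. have := a_pos t ltac:(lra). have := sf_pos t ltac:(lra). have := A_pos.
move=> h1 h2 h3. apply: Rmult_le_pos; [apply: Rlt_le; exact: Rinv_0_lt_compat | apply: Rlt_le; exact: Rdiv_lt_0_compat].
Qed.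

Lemma psi_bound s t m : 0 < s -> s <= t -> t <= m -> m < tau -> a s * psi t <= A / sf m.
Proof.
move=> hs hst htm hm. rewrite /psi.
have ha := a_pos s hs. have hat := a_pos t ltac:(lra). have hA := A_pos.
have hle := a_le s t ltac:(lra) hst.
have hi := inv_sf_le t m ltac:(lra) htm hm.
have hsf := sf_pos t ltac:(lra).
have : a s * / a t <= 1.
  apply: (Rmult_le_reg_r (a t)) => //. rewrite Rmult_assoc Rinv_l; lra.
move=> h1.
have -> : a s * (/ a t * (A / sf t)) = (a s * / a t) * A * / sf t by rewrite /Rdiv; ring.
rewrite /Rdiv. apply: Rmult_le_compat.
- apply: Rmult_le_pos; [apply: Rmult_le_pos; [lra| apply: Rlt_le; exact: Rinv_0_lt_compat] | lra].
- apply: Rlt_le; exact: Rinv_0_lt_compat.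
- nra.
- exact: hi.
Qed.

Lemma chi_decomp : exists m Lc, 0 < m < tau /\ 0 <= Lc /\
  forall s, 0 < s < m -> chi a s tau = RInt psi s m + Lc.
Proof.
case: near_tau => m [K0 [hm [hK0 hK]]].
have hA := A_pos.
case: (tail_nonneg psi m tau (/ a m * A * K0) (proj2 hm)).
- move=> t ht; apply: psi_cont; lra.
- move=> t ht; split; first (apply: psi_nn; lra).
  rewrite /psi. have ham := a_pos m ltac:(lra). have hat := a_pos t ltac:(lra).
  have h1 : / a t <= / a m by apply: Rinv_le_contravar => //; apply: a_le; lra.
  have h2 := hK t ht.
  have -> : / a m * A * K0 / sqrt (tau - t) = / a m * (A * (K0 / sqrt (tau - t))) by rewrite /Rdiv; ring.
  apply: Rmult_le_compat.
  + apply: Rlt_le; exact: Rinv_0_lt_compat.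
  + apply: Rlt_le; apply: Rdiv_lt_0_compat => //; apply: sf_pos; lra.
  + exact: h1.
  + rewrite /Rdiv; apply: Rmult_le_compat_l; lra.
move=> Lc [hLc hLc0].
exists m, Lc; split => //; split => // s hs.
have h1 := lowcont psi s m (/ a s * A * / sf m) (proj2 hs) (fun t ht => psi_cont t ltac:(lra)).
have h1' : filterlim (fun x => RInt psi x m) (at_right s) (locally (RInt psi s m)).
  apply: h1 => t ht. rewrite Rabs_right; last by (apply: Rle_ge; apply: psi_nn; lra).
  have has := a_pos s ltac:(lra).
  have := psi_bound s t m ltac:(lra) ltac:(lra) ltac:(lra) ltac:(lra).
  move=> h. apply: (Rmult_le_reg_l (a s)) => //. rewrite -Rmult_assoc -Rmult_assoc Rinv_r; last lra.
  by rewrite Rmult_1_l.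
have := gen_assemble psi s m tau _ _ (conj (proj2 hs) (proj2 hm)) (fun t ht => psi_cont t ltac:(lra)) h1' hLc.
move=> hg. rewrite /chi /iint. exact: (is_RInt_gen_unique _ _ hg).
Qed.

Lemma achi_small e : 0 < e -> exists eta, 0 < eta /\
  forall s, 0 < s < eta -> 0 <= a s * chi a s tau < e.
Proof.
move=> he.
case: chi_decomp => m [Lc [hm [hLc hdec]]].
have hA := A_pos. have hsm := sf_pos m ltac:(lra).
pose B := A / sf m.
have hB : 0 < B by apply: Rdiv_lt_0_compat.
pose del := Rmin (m / 2) (e / (2 * B)).
have hdel : 0 < del by apply: Rmin_pos; [lra | apply: Rdiv_lt_0_compat; lra].
have hdm : del <= m / 2 by apply: Rmin_l.
have hdB : del <= e / (2 * B) by apply: Rmin_r.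
pose C := RInt psi del m + Lc.
have hexp : forall x y, 0 < x <= y -> y < tau -> ex_RInt psi x y.
  move=> x y hx hy; apply: exRInt_c => t ht; apply: psi_cont.
  move: ht; rewrite /Rmin /Rmax; destruct Rle_dec; lra.
have hC : 0 <= C.
  have := RInt_ge_0 psi del m ltac:(lra) (hexp del m ltac:(lra) ltac:(lra)) (fun t ht => psi_nn t ltac:(lra)).
  rewrite /C; lra.
have := proj1 (filterlim_locally _ _) (a_cont 0 (Rle_refl 0)) (mkposreal (e / (2 * (C + 1))) ltac:(apply: Rdiv_lt_0_compat; lra)).
rewrite /= => -[[eta0 heta0] /= Heta].
exists (Rmin del eta0); split; first by apply: Rmin_pos.
move=> s hs.
have hs1 : s < del by have := Rmin_l del eta0; lra.
have hs2 : s < eta0 by have := Rmin_r del eta0; lra.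
have has := a_pos s ltac:(lra).
have has2 : a s < e / (2 * (C + 1)).
  have hb : ball 0 eta0 s by apply/ballR; rewrite Rabs_right; lra.
  have := Heta s hb. move/ballR. rewrite a0 Rminus_0_r Rabs_right; lra.
rewrite hdec; last lra.
have hch := RInt_Chasles psi s del m (hexp s del ltac:(lra) ltac:(lra)) (hexp del m ltac:(lra) ltac:(lra)).
rewrite /Hierarchy.plus /= in hch.
rewrite -hch.
have hI1 : 0 <= RInt psi s del := RInt_ge_0 psi s del ltac:(lra) (hexp s del ltac:(lra) ltac:(lra)) (fun t ht => psi_nn t ltac:(lra)).
have hI2 : a s * RInt psi s del <= del * B.
  have hsc := RInt_scal psi s del (a s) (hexp s del ltac:(lra) ltac:(lra)).
  rewrite /Hierarchy.scal /= /mult /= in hsc.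
  rewrite -hsc.
  have hb : forall t, s <= t <= del -> Rabs (a s * psi t) <= B.
    move=> t ht. rewrite Rabs_right.
    - apply: psi_bound; lra.
    - apply: Rle_ge; apply: Rmult_le_pos; [lra | apply: psi_nn; lra].
  have H := abs_RInt_le_const (fun t => a s * psi t) s del B ltac:(lra)
    (ex_RInt_scal psi s del (a s) (hexp s del ltac:(lra) ltac:(lra))) hb.
  rewrite hsc in H. have := Rle_abs (a s * RInt psi s del). nra.
have hdB2 : del * B <= e / 2.
  have : del * B <= e / (2 * B) * B by apply: Rmult_le_compat_r; lra.
  have -> : e / (2 * B) * B = e / 2 by field; lra.
  done.
have h3 : a s * C <= e / (2 * (C + 1)) * C by nra.
have h4 : e / (2 * (C + 1)) * C = e / 2 - e / (2 * (C + 1)) by field; lra.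
have h5 : 0 < e / (2 * (C + 1)) by apply: Rdiv_lt_0_compat; lra.
rewrite /C in h3 h4 h5 hC. split; nra.
Qed.

Lemma gthth0 : gthth_M a tau = 0.
Proof.
rewrite /gthth_M /Lim.
set u := fun n => _.
suff H : is_lim_seq u 0 by rewrite (is_lim_seq_unique _ _ H).
apply/is_lim_seq_spec => -[eps heps] /=.
pose e := Rmin 1 eps.
have he : 0 < e by apply: Rmin_pos; lra.
have he1 : e <= 1 by apply: Rmin_l.
have he2 : e <= eps by apply: Rmin_r.
case: (achi_small e he) => eta [heta H].
case: (nfloor_ex (/ eta) ltac:(apply: Rlt_le; apply: Rinv_0_lt_compat; lra)) => N [hN1 hN2].
exists N => n hn.
have hINR : INR N <= INR n by apply: le_INR.
have hpos : 0 < INR n + 1 by have := pos_INR n; lra.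
have hs : 0 < / (INR n + 1) by apply: Rinv_0_lt_compat.
have hs2 : / (INR n + 1) < eta.
  apply: Rle_lt_trans (_ : _ <= / (INR N + 1)) _.
  - apply: Rinv_le_contravar; [have := pos_INR N; lra | lra].
  - rewrite -(Rinv_inv eta). apply: Rinv_lt_contravar; last lra.
    apply: Rmult_lt_0_compat; [apply: Rinv_0_lt_compat; lra | have := pos_INR N; lra].
rewrite /u /Rbar_loc_seq /= Rplus_0_l (Rabs_right (/ (INR n + 1))); last lra.
have [h1 h2] := H _ (conj hs hs2).
rewrite Rminus_0_r.
set v := a _ * chi _ _ _ in h1 h2.
have -> : a (/ (INR n + 1)) * (a (/ (INR n + 1)) * 1) *
    (chi a (/ (INR n + 1)) tau * (chi a (/ (INR n + 1)) tau * 1)) = v * v by rewrite /v; ring.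
rewrite Rabs_right; last by apply: Rle_ge; nra.
nra.
Qed.

Definition dd := ad a tau.

Lemma ratio_ge t : 0 < t <= tau -> dd * a t <= ad a t * A.
Proof.
move=> ht.
case: (Req_dec t tau) => [->|hne]; first by rewrite /dd /A; lra.
have htt : t < tau by lra.
pose q := fun x => ad a x / a x.
have [xi [hxi Hxi]] : exists xi, t <= xi <= tau /\ q tau - q t =
   ((add a xi * a xi - ad a xi * ad a xi) / a xi ^ 2) * (tau - t).
  have := MVT_gen q t tau (fun x => (add a x * a x - ad a x * ad a x) / a x ^ 2).
  rewrite /Rmin /Rmax; destruct Rle_dec; last lra.
  case.
  - move=> x hx. apply: is_derive_div; [apply: ad_der; lra | apply: a_der; lra | have := a_pos x ltac:(lra); lra].
  - move=> x hx. apply/continuity_pt_filterlim. apply: c_div.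
    + apply: ad_cont; lra.
    + apply: a_cont; lra.
    + have := a_pos x ltac:(lra); lra.
  move=> xi [h1 h2]; exists xi; split => //.
have hxi0 : 0 < xi by lra.
have hax := a_pos xi hxi0.
have hc := hcond' xi hxi0.
have hneg : (add a xi * a xi - ad a xi * ad a xi) / a xi ^ 2 <= 0.
  rewrite /Rdiv. apply: Rmult_le_0_r; first nra.
  apply: Rlt_le; apply: Rinv_0_lt_compat; nra.
have hq : q t >= q tau by nra.
rewrite /q /dd /A in hq *.
have hat := a_pos t ltac:(lra). have haT := a_pos tau htau.
have e1 : ad a t = ad a t / a t * a t by field; lra.
have e2 : ad a tau = ad a tau / a tau * a tau by field; lra.
rewrite e1 e2. set u := ad a t / a t in hq *. set v := ad a tau / a tau in hq *.
have : v * a t <= u * a t by apply: Rmult_le_compat_r; lra.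
nra.
Qed.

Lemma exists_t1 : exists t1, 0 < t1 < tau /\ dd * a t1 < ad a t1 * A.
Proof.
apply: NNPP => hn.
have hall : forall t, 0 < t <= tau -> ad a t * A <= dd * a t.
  move=> t ht. case: (Req_dec t tau) => [->|hne]; first by rewrite /dd /A; lra.
  apply: Rnot_lt_le => hlt. apply: hn. exists t; split => //; lra.
have hA := A_pos. have hd : 0 < dd := ad_tau.
pose k := dd / A.
pose q := fun x => a x * exp (- (k * x)).
have hq : forall t, 0 < t < tau -> q tau <= q t.
  move=> t ht.
  have [xi [hxi Hxi]] : exists xi, t <= xi <= tau /\ q tau - q t =
     ((ad a xi - k * a xi) * exp (- (k * xi))) * (tau - t).
    have := MVT_gen q t tau (fun x => (ad a x - k * a x) * exp (- (k * x))).
    rewrite /Rmin /Rmax; destruct Rle_dec; last lra.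
    case.
    - move=> x hx. rewrite /q.
      have hdx := a_der x ltac:(lra).
      auto_derive; first exact: (ex_intro _ _ hdx).
      rewrite (is_derive_unique _ _ _ hdx). ring.
    - move=> x hx. apply/continuity_pt_filterlim. change (continuous q x). rewrite /q. apply: (c_mult a (fun x => exp (- (k * x)))).
      + apply: a_cont; lra.
      + apply: (ex_derive_continuous (fun x => exp (- (k * x)))). by auto_derive.
    move=> xi [h1 h2]; exists xi; split => //.
  have hxi0 : 0 < xi by lra.
  have h3 := hall xi ltac:(lra).
  have h4 : ad a xi - k * a xi <= 0.
    rewrite /k. apply: (Rmult_le_reg_r A) => //. field_simplify; lra.
  have h5 := exp_pos (- (k * xi)).
  have h6 : (ad a xi - k * a xi) * exp (- (k * xi)) <= 0 by nra.
  have h7 : (ad a xi - k * a xi) * exp (- (k * xi)) * (tau - t) <= 0 by apply: Rmult_le_0_r; lra.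
  lra.
pose c := q tau.
have hc : 0 < c by rewrite /c /q; apply: Rmult_lt_0_compat; [exact: A_pos | exact: exp_pos].
have := proj1 (filterlim_locally _ _) (a_cont 0 (Rle_refl 0)) (mkposreal c hc).
rewrite /= => -[[eta heta] /= Heta].
pose t := Rmin (eta / 2) (tau / 2).
have ht : 0 < t by apply: Rmin_pos; lra.
have ht1 : t <= eta / 2 by apply: Rmin_l.
have ht2 : t <= tau / 2 by apply: Rmin_r.
have hb : ball 0 eta t by apply/ballR; rewrite Rabs_right; lra.
have := Heta t hb. move/ballR. rewrite a0 Rminus_0_r.
have hat := a_pos t ht.
rewrite Rabs_right; last lra.
have := hq t ltac:(lra). rewrite /q -/c.
have hk : 0 < k by apply: Rdiv_lt_0_compat.
have : exp (- (k * t)) < 1.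
  rewrite -exp_0. apply: exp_increasing. nra.
have := exp_pos (- (k * t)).
rewrite /c /q. move=> h1 h2 h3 h4.
have : a t * exp (- (k * t)) < a t by nra.
lra.
Qed.

Definition hfun t := A / sf t - 1.
Definition psi2 t := ad a t * A / (sf t * (A + sf t)).
Definition GG t := a t / (A + sf t).
Definition Phi t := - hfun t / ad a t.
Definition phi t := add a t / ad a t ^ 2 *
  (sqrt (a tau ^ 2 - a 0 ^ 2) / sqrt (a tau ^ 2 - a t ^ 2) - 1).

Lemma sA0 : sqrt (a tau ^ 2 - a 0 ^ 2) = A.
Proof.
rewrite a0. have -> : a tau ^ 2 - 0 ^ 2 = A ^ 2 by rewrite /A; ring.
apply: sqrt_pow2. have := A_pos; lra.
Qed.

Lemma GG_der t : 0 < t < tau -> is_derive GG t (psi2 t).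
Proof.
move=> ht. have hdx := a_der t ltac:(lra).
rewrite /GG /psi2 /sf.
have hS2 := sf_sq t ltac:(lra). have hS := sf_pos t ltac:(lra). rewrite /sf in hS2 hS.
have hA := A_pos.
auto_derive.
  have e : A * (A * 1) + - (a t * (a t * 1)) = A ^ 2 - a t ^ 2 by ring.
  rewrite e. have hat := a_inc t tau ltac:(lra) ltac:(lra). have hat0 := a_pos t ltac:(lra).
  rewrite /A in hA *. have := sqrt_pos (a tau ^ 2 - a t ^ 2). repeat split; try (exists (ad a t); exact: hdx); try nra.
have e : A * (A * 1) + - (a t * (a t * 1)) = A ^ 2 - a t ^ 2 by ring.
rewrite e. change (Derive (fun x => a x) t) with (ad a t).
set S := sqrt (A ^ 2 - a t ^ 2) in hS hS2 *. clearbody S.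
have ha2 : a t ^ 2 = A ^ 2 - S ^ 2 by lra.
have hAS := Rmult_lt_0_compat _ _ hA hS. have hS2' := pow_lt S 2 hS. have hS3 := pow_lt S 3 hS. have hA2 := pow_lt A 2 hA.
have hA2S := Rmult_lt_0_compat _ _ hA2 hS. have hAS2 := Rmult_lt_0_compat _ _ hA hS2'.
field_simplify; try lra. rewrite ha2. field. split; apply: Rgt_not_eq; lra.
Qed.

Lemma Phi_der t : 0 < t < tau -> is_derive Phi t (phi t - A * a t / sf t ^ 3).
Proof.
move=> ht. have hdx := a_der t ltac:(lra). have hddx := ad_der t ltac:(lra).
have hS := sf_pos t ltac:(lra). rewrite /sf in hS.
have hA := A_pos. have hd := ad_pos t ltac:(lra).
have hat := a_inc t tau ltac:(lra) ltac:(lra). have hat0 := a_pos t ltac:(lra).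
rewrite /Phi /phi /hfun /sf sA0.
have e : A * (A * 1) + - (a t * (a t * 1)) = A ^ 2 - a t ^ 2 by ring.
auto_derive.
  rewrite e. rewrite /A in hA hS *.
  repeat split; try (exists (ad a t); exact: hdx); try (exists (add a t); exact: hddx); try nra; lra.
rewrite e. change (Derive (fun x => a x) t) with (ad a t).
change (Derive (fun x => ad a x) t) with (add a t).
set S := sqrt (A ^ 2 - a t ^ 2) in hS *. clearbody S.
field. lra.
Qed.

Lemma phi_eq t : phi t = add a t / ad a t ^ 2 * hfun t.
Proof. by rewrite /phi sA0. Qed.

Lemma hfun_nn t : 0 < t < tau -> 0 <= hfun t.
Proof.
move=> ht. rewrite /hfun. have := sf_pos t ltac:(lra). have := sf_lt_A t ltac:(lra).
move=> h1 h2. have : 1 <= A / sf t.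
  apply: (Rmult_le_reg_r (sf t)) => //. rewrite /Rdiv Rmult_assoc Rinv_l; lra.
lra.
Qed.

Lemma psi2_pos t : 0 < t < tau -> 0 < psi2 t.
Proof.
move=> ht. rewrite /psi2. have := sf_pos t ltac:(lra). have := ad_pos t ltac:(lra). have := A_pos.
move=> h1 h2 h3. apply: Rdiv_lt_0_compat; nra.
Qed.

Lemma gap_ineq t : 0 < t < tau ->
  hfun t * (ad a t * A - dd * a t) / a t ^ 2 <= psi2 t - dd * phi t.
Proof.
move=> ht.
have hat := a_pos t ltac:(lra). have hd := ad_pos t ltac:(lra). have hdd : 0 < dd := ad_tau.
have hS := sf_pos t ltac:(lra). have hS2 := sf_sq t ltac:(lra). have hA := A_pos.
have hh := hfun_nn t ht.
have hc := hcond' t ltac:(lra).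
have k1 : add a t / ad a t ^ 2 <= / a t.
  apply: (Rmult_le_reg_r (a t * ad a t ^ 2)); first by apply: Rmult_lt_0_compat => //; apply: pow_lt.
  have -> : add a t / ad a t ^ 2 * (a t * ad a t ^ 2) = a t * add a t by field; lra.
  have -> : / a t * (a t * ad a t ^ 2) = ad a t ^ 2 by field; lra.
  exact: hc.
have k2 : dd * phi t <= dd * hfun t / a t.
  rewrite phi_eq. have : add a t / ad a t ^ 2 * hfun t <= / a t * hfun t by apply: Rmult_le_compat_r.
  move=> h. have := Rmult_le_compat_l dd _ _ (Rlt_le _ _ hdd) h.
  have -> : dd * (/ a t * hfun t) = dd * hfun t / a t by rewrite /Rdiv; ring.
  by [].
have k3 : psi2 t = ad a t * A * hfun t / a t ^ 2.
  rewrite /psi2 /hfun. have ha2 : a t ^ 2 = A ^ 2 - sf t ^ 2 by lra.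
  rewrite ha2. field. have := sf_lt_A t ltac:(lra). move=> h. split; [nra | split; nra].
have -> : hfun t * (ad a t * A - dd * a t) / a t ^ 2 = ad a t * A * hfun t / a t ^ 2 - dd * hfun t / a t.
  by field; lra.
lra.
Qed.

Lemma gap_nn t : 0 < t < tau -> 0 <= psi2 t - dd * phi t.
Proof.
move=> ht. apply: Rle_trans (gap_ineq t ht).
have := ratio_ge t ltac:(lra). have := hfun_nn t ht. have := a_pos t ltac:(lra).
move=> h1 h2 h3. apply: Rmult_le_pos; [apply: Rmult_le_pos; lra | apply: Rlt_le; apply: Rinv_0_lt_compat; nra].
Qed.

Lemma gap_interval : exists p q eps, 0 < p < q /\ q < tau /\ 0 < eps /\
  forall t, p <= t <= q -> eps <= psi2 t - dd * phi t.
Proof.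
case: exists_t1 => t1 [ht1 hw1].
pose w t := ad a t * A - dd * a t.
have hwc : continuous w t1.
  rewrite /w. apply: c_minus; apply: c_mult.
  - apply: ad_cont; lra.
  - exact: c_const.
  - exact: c_const.
  - apply: a_cont; lra.
have hw1' : 0 < w t1 by rewrite /w; lra.
have := proj1 (filterlim_locally _ _) hwc (mkposreal (w t1 / 2) ltac:(lra)).
rewrite /= => -[[del hdel] /= Hdel].
pose de := Rmin (del / 2) (Rmin (t1 / 2) ((tau - t1) / 2)).
have hde : 0 < de by apply: Rmin_pos; [lra | apply: Rmin_pos; lra].
have hde1 : de <= del / 2 by apply: Rmin_l.
have hde2 : de <= t1 / 2 by rewrite /de; have := Rmin_r (del / 2) (Rmin (t1 / 2) ((tau - t1) / 2)); have := Rmin_l (t1 / 2) ((tau - t1) / 2); lra.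
have hde3 : de <= (tau - t1) / 2 by rewrite /de; have := Rmin_r (del / 2) (Rmin (t1 / 2) ((tau - t1) / 2)); have := Rmin_r (t1 / 2) ((tau - t1) / 2); lra.
pose p := t1 - de. pose q := t1 + de.
have hA := A_pos.
have hhp : 0 < hfun p.
  rewrite /hfun. have := sf_pos p ltac:(rewrite /p; lra). have := sf_lt_A p ltac:(rewrite /p; lra).
  move=> h1 h2. have : 1 < A / sf p.
    apply: (Rmult_lt_reg_r (sf p)) => //. rewrite /Rdiv Rmult_assoc Rinv_l; lra.
  lra.
exists p, q, (hfun p * (w t1 / 2) / A ^ 2).
split; first (rewrite /p /q; lra). split; first (rewrite /q; lra).
split; first (apply: Rdiv_lt_0_compat; [nra | nra]).
move=> t ht.
have ht' : 0 < t < tau by rewrite /p /q in ht; lra.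
apply: Rle_trans (gap_ineq t ht').
have hwt : w t1 / 2 < w t.
  have hb : ball t1 del t by apply/ballR; rewrite /p /q in ht; rewrite Rabs_lt_between'; lra.
  have := Hdel t hb. move/ballR. rewrite Rabs_lt_between'. lra.
have hht : hfun p <= hfun t.
  rewrite /hfun. have := sf_pos t ltac:(lra). have := sf_pos p ltac:(rewrite /p; lra).
  have := sf_anti p t ltac:(rewrite /p; lra) ltac:(lra). move=> h1 h2 h3.
  have : A / sf p <= A / sf t.
    rewrite /Rdiv. apply: Rmult_le_compat_l; first lra. apply: Rinv_le_contravar; lra.
  lra.
have hat := a_pos t ltac:(lra). have haA := aA t ltac:(lra).
have ha2 : a t ^ 2 <= A ^ 2 by nra.
rewrite -/(w t).
have e1 : hfun p * (w t1 / 2) / A ^ 2 <= hfun t * w t / A ^ 2.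
  rewrite /Rdiv. apply: Rmult_le_compat_r; first (apply: Rlt_le; apply: Rinv_0_lt_compat; nra).
  apply: Rmult_le_compat; lra.
apply: Rle_trans e1 _.
rewrite /Rdiv. apply: Rmult_le_compat_l; first (apply: Rmult_le_pos; lra).
apply: Rinv_le_contravar; nra.
Qed.

Definition rr t := add a t / ad a t ^ 2.

Lemma rr_cont t : 0 < t -> continuous rr t.
Proof.
move=> ht. rewrite /rr. apply: c_div.
- exact: add_cont.
- apply: c_pow. exact: ad_cont.
- have := ad_pos t ht. move=> h. apply: Rgt_not_eq. apply: pow_lt. lra.
Qed.

Lemma hfun_cont t : 0 < t < tau -> continuous hfun t.
Proof.
move=> ht. rewrite /hfun. apply: c_minus; last exact: c_const.
apply: c_div; [exact: c_const | apply: sf_cont; lra | have := sf_pos t ltac:(lra); lra].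
Qed.

Lemma phi_cont t : 0 < t < tau -> continuous phi t.
Proof.
move=> ht. apply: (continuous_ext (fun t => rr t * hfun t)).
  move=> u. by rewrite phi_eq.
apply: c_mult; [apply: rr_cont; lra | exact: hfun_cont].
Qed.

Lemma psi2_cont t : 0 < t < tau -> continuous psi2 t.
Proof.
move=> ht. rewrite /psi2. have := sf_pos t ltac:(lra). have := A_pos. move=> hA hS.
apply: c_div.
- apply: c_mult; [apply: ad_cont; lra | exact: c_const].
- apply: c_mult; [apply: sf_cont; lra | apply: c_plus; [exact: c_const | apply: sf_cont; lra]].
- apply: Rgt_not_eq. nra.
Qed.

Lemma GG_cont t : 0 <= t <= tau -> continuous GG t.
Proof.
move=> ht. rewrite /GG. have := sf_nn t. have := A_pos. move=> hA hS.
apply: c_div; [apply: a_cont; lra | apply: c_plus; [exact: c_const | apply: sf_cont; lra] | lra].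
Qed.

Lemma GG_nn t : 0 <= t -> 0 <= GG t.
Proof.
move=> ht. rewrite /GG. have := sf_nn t. have := A_pos. have := a_nn t ht. move=> h1 h2 h3.
apply: Rle_mult_inv_pos; lra.
Qed.

Lemma GG0 : GG 0 = 0.
Proof. by rewrite /GG a0 /Rdiv Rmult_0_l. Qed.

Lemma GGtau : GG tau = 1.
Proof.
rewrite /GG /sf. have -> : A ^ 2 - a tau ^ 2 = 0 by rewrite /A; ring.
rewrite sqrt_0 Rplus_0_r. have := A_pos. rewrite /A => h. field. lra.
Qed.

Lemma exR (f : R -> R) x y : 0 < x -> x <= y -> y < tau ->
  (forall t, 0 < t < tau -> continuous f t) -> ex_RInt f x y.
Proof.
move=> hx hxy hy hc. apply: exRInt_c => t ht. apply: hc.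
move: ht; rewrite /Rmin /Rmax; destruct Rle_dec; lra.
Qed.

Lemma RInt_psi2 x y : 0 < x -> x <= y -> y < tau -> RInt psi2 x y = GG y - GG x.
Proof.
move=> hx hxy hy.
have h := is_RInt_derive GG psi2 x y.
rewrite (is_RInt_unique _ _ _ _ (h _ _)) //.
- move=> t ht. apply: GG_der. move: ht; rewrite /Rmin /Rmax; destruct Rle_dec; lra.
- move=> t ht. apply: psi2_cont. move: ht; rewrite /Rmin /Rmax; destruct Rle_dec; lra.
Qed.

Definition Phi' t := phi t - A * a t / sf t ^ 3.

Lemma RInt_phi_lb x m : 0 < x -> x <= m -> m < tau -> Phi m - Phi x <= RInt phi x m.
Proof.
move=> hx hxm hm.
have hc' : forall t, 0 < t < tau -> continuous Phi' t.
  move=> t ht. rewrite /Phi'. apply: c_minus; first exact: phi_cont.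
  have := sf_pos t ltac:(lra). move=> hS.
  apply: c_div; [apply: c_mult; [exact: c_const | apply: a_cont; lra] | apply: c_pow; apply: sf_cont; lra |].
  apply: Rgt_not_eq. apply: pow_lt. lra.
have h := is_RInt_derive Phi Phi' x m.
have e : RInt Phi' x m = Phi m - Phi x.
  rewrite (is_RInt_unique _ _ _ _ (h _ _)).
  - by rewrite /Hierarchy.minus /Hierarchy.plus /Hierarchy.opp /=.
  - move=> t ht. apply: Phi_der. move: ht; rewrite /Rmin /Rmax; destruct Rle_dec; lra.
  - move=> t ht. apply: hc'. move: ht; rewrite /Rmin /Rmax; destruct Rle_dec; lra.
rewrite -e.
apply: RInt_le => //.
+ exact: exR hx hxm hm hc'.
+ exact: exR hx hxm hm phi_cont.
+ move=> t ht. rewrite /Phi'. have := sf_pos t ltac:(lra). have := a_pos t ltac:(lra). have := A_pos.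
  move=> h1 h2 h3. have : 0 <= A * a t / sf t ^ 3.
    apply: Rle_mult_inv_pos; [nra | apply: pow_lt; lra].
  lra.
Qed.

Lemma Phi_np x : 0 < x < tau -> Phi x <= 0.
Proof.
move=> hx. rewrite /Phi. have := hfun_nn x hx. have := ad_pos x ltac:(lra). move=> h1 h2.
rewrite /Rdiv. have : 0 <= hfun x * / ad a x by apply: Rle_mult_inv_pos.
lra.
Qed.

Lemma phi_head m : 0 < m < tau -> exists L1, filterlim (fun x => RInt phi x m) (at_right 0) (locally L1).
Proof.
move=> hm.
have hdd : 0 < dd := ad_tau.
pose g0 t := / dd * psi2 t - phi t.
have hg0c : forall t, 0 < t < tau -> continuous g0 t.
  move=> t ht. rewrite /g0. apply: c_minus; [apply: c_mult; [exact: c_const | exact: psi2_cont] | exact: phi_cont].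
have hg0n : forall t, 0 < t < tau -> 0 <= g0 t.
  move=> t ht. rewrite /g0. have := gap_nn t ht. move=> h.
  have -> : / dd * psi2 t - phi t = / dd * (psi2 t - dd * phi t) by field; lra.
  apply: Rmult_le_pos => //. apply: Rlt_le; exact: Rinv_0_lt_compat.
have hrel : forall x, 0 < x <= m -> RInt g0 x m = / dd * (GG m - GG x) - RInt phi x m.
  move=> x hx.
  rewrite /g0. have e := RInt_minus (fun t => / dd * psi2 t) phi x m.
  rewrite /Hierarchy.minus /Hierarchy.plus /Hierarchy.opp /= in e. rewrite e.
  - have e2 := RInt_scal psi2 x m (/ dd). rewrite /Hierarchy.scal /= /mult /= in e2.
    rewrite e2; last by apply: (exR _ x m); try lra; exact: psi2_cont.
    rewrite RInt_psi2; lra.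
  - apply: (exR _ x m) => //; try lra. move=> t ht. apply: c_mult; [exact: c_const | exact: psi2_cont].
  - apply: (exR _ x m) => //; try lra. exact: phi_cont.
case: (mono_lim_right (fun x => RInt g0 x m) 0 m (/ dd * GG m - Phi m) (proj1 hm)).
- move=> x y hx hxy hy /=.
  rewrite -(RInt_Chasles g0 x y m (exR _ x y hx hxy ltac:(lra) hg0c) (exR _ y m ltac:(lra) hy ltac:(lra) hg0c)).
  rewrite /Hierarchy.plus /=.
  have := RInt_ge_0 g0 x y hxy (exR _ x y hx hxy ltac:(lra) hg0c) (fun t ht => hg0n t ltac:(lra)).
  lra.
- move=> x hx /=. rewrite hrel //.
  have := RInt_phi_lb x m ltac:(lra) ltac:(lra) ltac:(lra).
  have := Phi_np x ltac:(lra). have := GG_nn x ltac:(lra).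
  move=> h1 h2 h3. have : 0 <= / dd * GG x by apply: Rmult_le_pos => //; apply: Rlt_le; exact: Rinv_0_lt_compat.
  lra.
move=> L0 [hL0 _].
exists (/ dd * GG m + - / dd * GG 0 + - L0).
apply: (filterlim_ext_loc (fun x => / dd * GG m + - / dd * GG x + - RInt g0 x m)).
  apply: filter_imp (ev_right 0 m (proj1 hm)) => x hx. rewrite hrel; last lra. ring.
apply: lim_plus; [apply: lim_plus; [exact: lim_const | apply: lim_mulc; apply: lim_right_cont; apply: GG_cont; lra] |].
have -> : - L0 = -1 * L0 by ring.
apply: (filterlim_ext (fun x => -1 * RInt g0 x m)); first by move=> x; ring.
exact: lim_mulc.
Qed.

Lemma phi_tail : exists m L2, 0 < m < tau /\
  filterlim (fun y => RInt phi m y) (at_left tau) (locally L2).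
Proof.
case: near_tau => m [K0 [hm [hK0 hK]]].
have hb : forall x, m <= x <= tau -> filterlim rr (locally x) (locally (rr x)).
  move=> x hx. apply: rr_cont; lra.
case: (bounded_continuity rr m tau hb) => B HB.
have hB : 0 <= B by have := HB m ltac:(lra); have := Rabs_pos (rr m); rewrite /norm /= /abs /=; lra.
have hA := A_pos.
case: (tail_abs phi m tau (B * A * K0) (proj2 hm)).
- move=> t ht; apply: phi_cont; lra.
- move=> t ht. rewrite phi_eq Rabs_mult.
  have h1 : Rabs (rr t) <= B by have := HB t ltac:(lra); rewrite /norm /= /abs /=; lra.
  have hh := hfun_nn t ltac:(lra).
  rewrite (Rabs_right (hfun t)); last lra.
  have h2 : hfun t <= A * (K0 / sqrt (tau - t)).
    rewrite /hfun. have := hK t ht. have := sf_pos t ltac:(lra). move=> hS h.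
    have : A / sf t <= A * (K0 / sqrt (tau - t)) by rewrite /Rdiv; apply: Rmult_le_compat_l; lra.
    lra.
  have -> : B * A * K0 / sqrt (tau - t) = B * (A * (K0 / sqrt (tau - t))) by rewrite /Rdiv; ring.
  apply: Rmult_le_compat => //; exact: Rabs_pos.
move=> L2 h2. by exists m, L2.
Qed.

Lemma phi_int : exists L, ff a tau 0 = L /\
  filterlim (fun ab => RInt phi (fst ab) (snd ab)) (filter_prod (at_right 0) (at_left tau)) (locally L).
Proof.
case: phi_tail => m [L2 [hm h2]].
case: (phi_head m hm) => L1 h1.
exists (L1 + L2). split.
- have hg := gen_assemble phi 0 m tau L1 L2 hm phi_cont h1 h2.
  rewrite /ff /iint. exact: (is_RInt_gen_unique _ _ hg).
- exact: gen_lim hm phi_cont h1 h2.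
Qed.

Lemma key_ineq : ad a tau * ff a tau 0 < 1.
Proof.
case: phi_int => L [-> hL].
case: gap_interval => p [q [eps [hpq [hq [heps Hgap]]]]].
have hdd : 0 < dd := ad_tau.
pose F := filter_prod (at_right 0) (at_left tau).
have ev : F (fun ab => dd * RInt phi (fst ab) (snd ab) <= GG (snd ab) - GG (fst ab) - eps * (q - p)).
  exists (fun x => 0 < x < p) (fun y => q < y < tau).
  - apply: ev_right; lra.
  - apply: ev_left; lra.
  move=> x y hx hy /=.
  pose g t := psi2 t - dd * phi t.
  have hgc : forall t, 0 < t < tau -> continuous g t.
    move=> t ht. rewrite /g. apply: c_minus; [exact: psi2_cont | apply: c_mult; [exact: c_const | exact: phi_cont]].
  have e1 : RInt g x y = (GG y - GG x) - dd * RInt phi x y.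
    rewrite /g. have e := RInt_minus psi2 (fun t => dd * phi t) x y.
    rewrite /Hierarchy.minus /Hierarchy.plus /Hierarchy.opp /= in e. rewrite e.
    - have e2 := RInt_scal phi x y dd. rewrite /Hierarchy.scal /= /mult /= in e2.
      rewrite e2; last by apply: (exR _ x y); try lra; exact: phi_cont.
      rewrite RInt_psi2; lra.
    - by apply: (exR _ x y); try lra; exact: psi2_cont.
    - apply: (exR _ x y); try lra. move=> t ht. apply: c_mult; [exact: c_const | exact: phi_cont].
  have c1 := RInt_Chasles g x p y (exR _ x p ltac:(lra) ltac:(lra) ltac:(lra) hgc) (exR _ p y ltac:(lra) ltac:(lra) ltac:(lra) hgc).
  have c2 := RInt_Chasles g p q y (exR _ p q ltac:(lra) ltac:(lra) ltac:(lra) hgc) (exR _ q y ltac:(lra) ltac:(lra) ltac:(lra) hgc).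
  rewrite /Hierarchy.plus /= in c1 c2.
  have i1 := RInt_ge_0 g x p ltac:(lra) (exR _ x p ltac:(lra) ltac:(lra) ltac:(lra) hgc) (fun t ht => gap_nn t ltac:(lra)).
  have i3 := RInt_ge_0 g q y ltac:(lra) (exR _ q y ltac:(lra) ltac:(lra) ltac:(lra) hgc) (fun t ht => gap_nn t ltac:(lra)).
  have i2 : RInt (fun _ => eps) p q <= RInt g p q.
    apply: RInt_le; [lra | exact: ex_RInt_const | exact: (exR _ p q ltac:(lra) ltac:(lra) ltac:(lra) hgc) |].
    move=> t ht. apply: Hgap; lra.
  rewrite RInt_const /Hierarchy.scal /= /mult /= in i2.
  lra.
have hlim1 : filterlim (fun ab => dd * RInt phi (fst ab) (snd ab)) F (locally (dd * L)).
  exact: lim_mulc.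
have hlim2 : filterlim (fun ab => GG (snd ab) - GG (fst ab) - eps * (q - p)) F (locally (1 - 0 - eps * (q - p))).
  apply: lim_plus; last exact: lim_const.
  apply: lim_plus.
  - rewrite -GGtau. apply: (filterlim_comp _ _ _ snd GG _ _ _ filterlim_snd).
    apply: lim_left_cont. apply: GG_cont; lra.
  - have -> : - 0 = -1 * GG 0 by rewrite GG0; ring.
    apply: (filterlim_ext (fun ab => -1 * GG (fst ab))); first by move=> ab; ring.
    apply: lim_mulc. apply: (filterlim_comp _ _ _ fst GG _ _ _ filterlim_fst).
    apply: lim_right_cont. apply: GG_cont; lra.
have := @filterlim_le _ F _ _ _ (dd * L) (1 - 0 - eps * (q - p)) ev hlim1 hlim2.
have hPF : ProperFilter' F.
  apply: filter_prod_proper'; try (apply: Proper_StrongProper; [exact: at_right_proper_filter | exact: at_left_proper_filter]).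
move=> H. have := H hPF. rewrite /= /dd. have := Rmult_lt_0_compat _ _ heps (sub_pos _ _ (proj2 hpq)). lra.
Qed.

Lemma gtt_ne0 : gtt_M a tau <> 0.
Proof.
rewrite /gtt_M. have := key_ineq. move=> h.
have : 0 < (1 - ad a tau * ff a tau 0) ^ 2 by apply: pow_lt; lra.
lra.
Qed.

End Main.

Import GRing.Theory.

Lemma rank_lemma g l x y z : g <> 0 -> 0 < x^2+y^2+z^2 -> l * (x^2+y^2+z^2) = -1 ->
  \rank (mx_of_rows
    [:: [:: g; 0; 0; 0];
        [:: 0; 1 + l * (y ^ 2 + z ^ 2); - (l * x * y); - (l * x * z)];
        [:: 0; - (l * x * y); 1 + l * (x ^ 2 + z ^ 2); - (l * y * z)];
        [:: 0; - (l * x * z); - (l * y * z); 1 + l * (x ^ 2 + y ^ 2)]]) = 2%N.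
Proof.
move=> hg hr hl.
set M := mx_of_rows _.
pose A : 'M[R]_(4,2) := (\matrix_(i < 4, j < 2) nth 0 (nth [::] [:: [:: 1; 0]; [:: 0; x]; [:: 0; y]; [:: 0; z]] i) j)%R.
pose B : 'M[R]_(2,4) := (\matrix_(i < 2, j < 4) nth 0 (nth [::] [:: [:: g; 0; 0; 0]; [:: 0; -l*x; -l*y; -l*z]] i) j)%R.
have eM : M = (A *m B)%R.
  apply/matrixP => i j; rewrite !mxE !big_ord_recr big_ord0 /= !mxE.
  case: i => [[|[|[|[|?]]]] ?] //=; case: j => [[|[|[|[|?]]]] ?] //=;
  rewrite /GRing.add /GRing.mul /GRing.opp /GRing.zero /GRing.one /=; nra.

apply/eqP; rewrite eqn_leq; apply/andP; split.
  by rewrite eM; apply: leq_trans (mxrankM_maxl _ _) (rank_leq_col _).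
pose D : 'M[R]_(4,2) := (\matrix_(i < 4, j < 2) nth 0 (nth [::] [:: [:: 1; 0]; [:: 0; x]; [:: 0; y]; [:: 0; z]] i) j)%R.
pose r2 := x^2+y^2+z^2.
pose C : 'M[R]_2 := diag_mx (\row_(j < 2) nth 0 [:: g; r2] j)%R.
have eC : ((D^T *m M) *m D)%R = C.
  apply/matrixP => i j; rewrite !mxE !big_ord_recr big_ord0 /= !mxE.
  rewrite !big_ord_recr !big_ord0 /= !mxE.
  case: i => [[|[|?]] ?] //=; case: j => [[|[|?]] ?] //=;
  rewrite ?mulr1n ?mulr0n /GRing.add /GRing.mul /GRing.opp /GRing.zero /GRing.one /=; rewrite /r2; nra.
have hC : \rank ((D^T *m M) *m D)%R = 2%N.
  rewrite eC; apply: mxrank_unit.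
  rewrite unitmxE det_diag unitfE !big_ord_recr big_ord0 /= !mxE /=.
  apply/eqP; rewrite /GRing.mul /GRing.one /=; rewrite /r2 => h.
  by case: (Rmult_integral _ _ h) => h1; [apply: hg; lra | lra].
by have := leq_trans (mxrankM_maxl (D^T *m M)%R D) (mxrankM_maxr D^T M); rewrite hC.
Qed.

Theorem corollary7p8 (a : R -> R) :
  regular_scale_factor a ->
  (forall t, a (- t) = a t) ->
  ((exists d : R, filterlim (Derive a) (at_right 0) (locally d) /\ 0 < d) \/
   (is_derive a 0 0 /\
    exists n : nat, ex_derive_n a n 0 /\ Derive_n a n 0 <> 0)) ->
  forall tau x y z : R, 0 < tau ->
    sqrt (x ^ 2 + y ^ 2 + z ^ 2) = rhoM a tau ->
    \rank (metric_M a tau x y z) = 2%N.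
Proof.
move=> Hreg _ _ tau x y z htau hsq.
have hr := @rho_pos a Hreg tau htau.
have hg := @gthth0 a Hreg tau htau.
have hgt := @gtt_ne0 a Hreg tau htau.
have hpos : 0 <= x ^ 2 + y ^ 2 + z ^ 2 by nra.
have hx : x ^ 2 + y ^ 2 + z ^ 2 = rhoM a tau ^ 2 by rewrite -hsq pow2_sqrt.
rewrite /metric_M. apply: rank_lemma => //.
- rewrite hx; apply: pow_lt; lra.
- rewrite hx /lambda0_M hg. field. lra.
Qed.
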